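(* For all $g,g'\in G$: (i) $\langle go,g\omega_-\rangle=H(gr)=-\langle g^{-1}o,\omega_-\rangle$; (ii) $H(g'g)=H(g)+\langle g'o,g'g\omega_+\rangle$; (iii) $H(g'gr)=H(gr)+\langle g'o,g'g\omega_-\rangle$.
   Context: Let $q\ge2$ and $\mathfrak G$ the $(q+1)$-regular tree with vertex set $\mathfrak X$ and graph distance $d$; $\Omega$ is its boundary (infinite non-backtracking edge chains modulo eventual equality up to shift), $[x,\omega)$ the geodesic ray from $x$ to $\omega$. Fix a vertex $o$ and $\omega_-\neq\omega_+\in\Omega$ such that $o$ lies on the geodesic $]\omega_-,\omega_+[$. Horocycle bracket: $\langle x,\omega\rangle=d(o,y)-d(x,y)$ where $[o,\omega)\cap[x,\omega)=[y,\omega)$. $G=\mathrm{Aut}(\mathfrak G)$, $K=\mathrm{Stab}_G(o)$, $B_{\omega_+}=\{g\in G:g\omega_+=\omega_+,\ g\text{ fixes some vertex}\}$, and $\tau\in G$ a fixed automorphism with $\tau\omega_\pm=\omega_\pm$ translating $]\omega_-,\omega_+[$ by one step towards $\omega_+$. Every $g\in G$ can be written $g=kn\tau^j$ with $k\in K$, $n\in B_{\omega_+}$, and $j=:H(g)\in\mathbb Z$ unique. $r\in K$ is a fixed element with $r^2=\mathrm{id}$ and $r\tau^jr^{-1}=\tau^{-j}$ for all $j\in\mathbb Z$. *)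

(* Defs.v *)
From Stdlib Require Import ZArith List ClassicalEpsilon.
Set Implicit Arguments.

Section Tree.
Variables (X : Type) (adj : X -> X -> Prop).

Inductive walk : nat -> X -> X -> Prop :=
| walk0 x : walk 0 x x
| walkS n x y z : adj x y -> walk n y z -> walk (S n) x z.

Definition is_dist (x y : X) (n : nat) : Prop :=
  walk n x y /\ forall m, walk m x y -> n <= m.
Definition dist (x y : X) : nat := epsilon (inhabits 0) (is_dist x y).

Definition is_regular_tree (q : nat) : Prop :=
  (forall x y, adj x y -> adj y x) /\
  (forall x, ~ adj x x) /\
  (forall x y, exists n, walk n x y) /\
  (forall (n : nat) (p : nat -> X), 1 <= n ->
     (forall i, i < n -> adj (p i) (p (S i))) ->
     (forall i, S (S i) <= n -> p (S (S i)) <> p i) ->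
     p 0 <> p n) /\
  (forall x, exists l : list X,
     length l = S q /\ NoDup l /\ forall y, adj x y <-> In y l).

(* infinite non-backtracking chains (rays); boundary points are rays
   modulo [ray_equiv] (eventual equality up to shift) *)
Definition is_ray (r : nat -> X) : Prop :=
  forall n, adj (r n) (r (S n)) /\ r (S (S n)) <> r n.
Definition ray_equiv (r s : nat -> X) : Prop :=
  exists k m, forall n, r (n + k) = s (n + m).

Definition geod_ray (x : X) (w r : nat -> X) : Prop :=
  is_ray r /\ r 0 = x /\ ray_equiv r w.

(* horocycle bracket <x, w> with base point o *)
Definition horo (o x : X) (w : nat -> X) : Z :=
  epsilon (inhabits 0%Z) (fun z => exists (y : X) (ro rx ry : nat -> X),
    geod_ray o w ro /\ geod_ray x w rx /\ geod_ray y w ry /\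
    (forall v, ((exists i, ro i = v) /\ (exists i, rx i = v)) <->
               (exists i, ry i = v)) /\
    z = (Z.of_nat (dist o y) - Z.of_nat (dist x y))%Z).

Record Aut := mkAut {
  af : X -> X;
  ainv : X -> X;
  ainvK : forall x, ainv (af x) = x;
  afK : forall x, af (ainv x) = x;
  af_adj : forall x y, adj x y <-> adj (af x) (af y) }.

Definition aut_eq (g h : Aut) : Prop := forall x, af g x = af h x.

Program Definition aut_id : Aut := @mkAut (fun x => x) (fun x => x) _ _ _.
Next Obligation. tauto. Qed.

Program Definition aut_comp (g h : Aut) : Aut :=
  @mkAut (fun x => af g (af h x)) (fun x => ainv h (ainv g x)) _ _ _.
Next Obligation. now rewrite !ainvK. Qed.
Next Obligation. now rewrite !afK. Qed.
Next Obligation. now rewrite (af_adj h), (af_adj g). Qed.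

Program Definition aut_inv (g : Aut) : Aut := @mkAut (ainv g) (af g) _ _ _.
Next Obligation. now rewrite afK. Qed.
Next Obligation. now rewrite ainvK. Qed.
Next Obligation. rewrite (af_adj g (ainv g x) (ainv g y)), !afK; tauto. Qed.

Fixpoint aut_npow (g : Aut) (n : nat) : Aut :=
  match n with O => aut_id | S n => aut_comp g (aut_npow g n) end.

Definition aut_zpow (g : Aut) (j : Z) : Aut :=
  match j with
  | Z0 => aut_id
  | Zpos p => aut_npow g (Pos.to_nat p)
  | Zneg p => aut_npow (aut_inv g) (Pos.to_nat p)
  end.

Definition act_ray (g : Aut) (w : nat -> X) : nat -> X := fun n => af g (w n).

Definition inK (o : X) (k : Aut) : Prop := af k o = o.
Definition inB (wp : nat -> X) (n : Aut) : Prop :=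
  ray_equiv (act_ray n wp) wp /\ exists x, af n x = x.

(* H(g) = the j with g = k n tau^j, k in K, n in B_{w+} *)
Definition Hiw (o : X) (wp : nat -> X) (tau : Aut) (g : Aut) : Z :=
  epsilon (inhabits 0%Z) (fun j => exists k n, inK o k /\ inB wp n /\
    aut_eq g (aut_comp k (aut_comp n (aut_zpow tau j)))).

End Tree.

(* Main.v *)
Require Import Defs.
From Stdlib Require Import ZArith Lia List Classical ClassicalEpsilon.

Section Tree.
Variables (X : Type) (adj : X -> X -> Prop).
Hypothesis Hsym : forall x y, adj x y -> adj y x.
Hypothesis Hcyc : forall (n : nat) (p : nat -> X), 1 <= n ->
     (forall i, i < n -> adj (p i) (p (S i))) ->
     (forall i, S (S i) <= n -> p (S (S i)) <> p i) ->
     p 0 <> p n.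
Hypothesis Hconn : forall x y, exists n, walk adj n x y.

Definition nbw (p : nat -> X) (n : nat) : Prop :=
  (forall i, i < n -> adj (p i) (p (S i))) /\
  (forall i, S (S i) <= n -> p (S (S i)) <> p i).

Lemma nbw_le p n m : nbw p n -> m <= n -> nbw p m.
Proof. intros [H1 H2] Hm; split; intros; [apply H1|apply H2]; lia. Qed.

Lemma nbw_shift p n k : nbw p n -> k <= n -> nbw (fun i => p (k + i)) (n - k).
Proof.
  intros [H1 H2] Hk; split; intros i Hi.
  - replace (k + S i) with (S (k + i)) by lia. apply H1; lia.
  - replace (k + S (S i)) with (S (S (k + i))) by lia. apply H2; lia.
Qed.

Lemma nb_unique : forall N n n' p p', n + n' <= N -> nbw p n -> nbw p' n' ->
  p 0 = p' 0 -> p n = p' n' -> n = n' /\ forall i, i <= n -> p i = p' i.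
Proof.
  induction N; intros n n' p p' HN Hp Hp' H0 Hn.
  - assert (n = 0) by lia; assert (n' = 0) by lia; subst. split; auto.
    intros i Hi; assert (i = 0) by lia; subst; auto.
  - destruct n as [|a]; destruct n' as [|b].
    + split; auto. intros i Hi; assert (i = 0) by lia; subst; auto.
    + exfalso. apply (Hcyc (S b) p'); try lia; try apply Hp'. congruence.
    + exfalso. apply (Hcyc (S a) p); try lia; try apply Hp. congruence.
    + destruct (classic (p a = p' b)) as [E|E].
      * destruct (IHN a b p p') as [Hab Hag]; try lia; try (eapply nbw_le; eauto; lia); auto.
        subst b. split; auto. intros i Hi. destruct (Nat.eq_dec i (S a)); [subst; auto| apply Hag; lia].
      * exfalso.
        remember (S a) as n. remember (S b) as n'.
        set (c := fun i => if Nat.leb i n then p i else p' (n + n' - i)).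
        assert (Hc2 : forall i, n <= i -> c i = p' (n + n' - i)).
        { intros i Hi. unfold c. destruct (Nat.leb_spec i n).
          - assert (i = n) by lia. subst i. rewrite Hn. f_equal. lia.
          - reflexivity. }
        assert (Hc1 : forall i, i <= n -> c i = p i).
        { intros i Hi. unfold c. destruct (Nat.leb_spec i n); [reflexivity | lia]. }
        apply (Hcyc (n + n') c).
        -- lia.
        -- intros i Hi. destruct (le_lt_dec n i).
           ++ rewrite !Hc2 by lia. apply Hsym.
              replace (n + n' - i) with (S (n + n' - S i)) by lia. apply Hp'. lia.
           ++ rewrite !Hc1 by lia. apply Hp. lia.
        -- intros i Hi. destruct (le_lt_dec n i).
           ++ rewrite !Hc2 by lia. replace (n + n' - i) with (S (S (n + n' - S (S i)))) by lia.
              intro Heq. apply (proj2 Hp' (n + n' - S (S i))). lia. auto.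
           ++ destruct (le_lt_dec (S (S i)) n).
              ** rewrite !Hc1 by lia. apply Hp; lia.
              ** assert (i = a) by lia. subst i. rewrite Hc2 by lia. rewrite Hc1 by lia.
                 replace (n + n' - S (S a)) with b by lia. intro Heq; apply E; symmetry; exact Heq.
        -- rewrite Hc1 by lia. rewrite Hc2 by lia. replace (n + n' - (n + n')) with 0 by lia. auto.
Qed.

Lemma nbw_walk : forall n p, nbw p n -> walk adj n (p 0) (p n).
Proof.
  induction n; intros p Hp.
  - constructor.
  - apply walkS with (p 1). apply Hp; lia.
    apply (IHn (fun i => p (S i))). split; intros i Hi; [apply Hp|apply Hp]; lia.
Qed.

Lemma reduce : forall m x y, walk adj m x y ->
  exists p n, nbw p n /\ p 0 = x /\ p n = y /\ n <= m.
Proof.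
  intros m x y W; induction W.
  - exists (fun _ => x), 0. repeat split; intros; lia.
  - destruct IHW as (p & k & Hp & Hp0 & Hpk & Hk).
    destruct (classic (1 <= k /\ p 1 = x)) as [[Hk1 E]|NE].
    + exists (fun i => p (S i)), (k - 1). split; [|split; [auto|split]].
      * split; intros i Hi; [apply Hp|apply Hp]; lia.
      * replace (S (k - 1)) with k by lia; auto.
      * lia.
    + exists (fun i => match i with 0 => x | S j => p j end), (S k).
      split; [|split; [auto|split; [auto|lia]]].
      split.
      * intros [|i] Hi; [subst; auto|apply Hp; lia].
      * intros [|i] Hi.
        -- intro E. apply NE. split; [lia|auto].
        -- apply Hp; lia.
Qed.

Lemma is_dist_dist x y n : is_dist adj x y n -> dist adj x y = n.
Proof.
  intros H. unfold dist.
  assert (Hs := epsilon_spec (inhabits 0) (is_dist adj x y) (ex_intro _ n H)).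
  destruct H as [H1 H2]; destruct Hs as [H3 H4].
  specialize (H2 _ H3); specialize (H4 _ H1). lia.
Qed.

Lemma nb_dist p n : nbw p n -> dist adj (p 0) (p n) = n.
Proof.
  intros Hp. apply is_dist_dist. split; [apply nbw_walk; auto|].
  intros m W. destruct (reduce _ _ _ W) as (q & k & Hq & Hq0 & Hqk & Hk).
  destruct (nb_unique (n + k) n k p q) as [E _]; auto. lia.
Qed.

Lemma geod_exists x y : exists p, nbw p (dist adj x y) /\ p 0 = x /\ p (dist adj x y) = y.
Proof.
  destruct (Hconn x y) as [m W]. destruct (reduce _ _ _ W) as (p & n & Hp & H0 & Hn & _).
  assert (E := nb_dist p n Hp). rewrite H0, Hn in E. rewrite E. exists p; auto.
Qed.


Lemma min_nat (P : nat -> Prop) : (exists n, P n) -> exists n, P n /\ forall m, P m -> n <= m.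
Proof.
  intros [n Hn].
  destruct (classic (exists n, P n /\ forall m, P m -> n <= m)) as [H|Hno]; auto.
  exfalso.
  assert (forall N m, m <= N -> ~ P m).
  { induction N; intros m Hm HP.
    - apply Hno. exists m. split; auto. intros; lia.
    - destruct (Nat.eq_dec m (S N)).
      + subst. apply Hno. exists (S N). split; auto. intros m' Hm'.
        destruct (le_lt_dec (S N) m'); auto. exfalso. apply (IHN m'); auto; lia.
      + apply (IHN m); auto; lia. }
  apply (H n n); auto.
Qed.

Lemma ray_nbw r n : is_ray adj r -> nbw r n.
Proof. intros Hr; split; intros i Hi; apply Hr. Qed.

Lemma ray_shift r a : is_ray adj r -> is_ray adj (fun n => r (n + a)).
Proof. intros Hr n. simpl. apply Hr. Qed.

Lemma ray_dist r a n : is_ray adj r -> dist adj (r a) (r (n + a)) = n.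
Proof.
  intros Hr. assert (H := nb_dist _ _ (ray_nbw (fun i => r (i + a)) n (ray_shift r a Hr))).
  cbv beta in H. exact H.
Qed.

Lemma ray_dist0 r n : is_ray adj r -> dist adj (r 0) (r n) = n.
Proof. intros Hr. exact (nb_dist _ _ (ray_nbw r n Hr)). Qed.

Lemma req_refl (r : nat -> X) : ray_equiv r r.
Proof. exists 0, 0; auto. Qed.
Lemma req_sym (r s : nat -> X) : ray_equiv r s -> ray_equiv s r.
Proof. intros (k & m & H); exists m, k; intros; auto. Qed.
Lemma req_trans (r s t : nat -> X) : ray_equiv r s -> ray_equiv s t -> ray_equiv r t.
Proof.
  intros (k & m & H1) (k' & m' & H2). exists (k' + k), (m + m'). intro n.
  replace (n + (k' + k)) with ((n + k') + k) by lia. rewrite H1.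
  replace (n + k' + m) with ((n + m) + k') by lia. rewrite H2. f_equal; lia.
Qed.
Lemma req_shift (r s : nat -> X) a b : ray_equiv r s -> ray_equiv (fun n => r (n + a)) (fun n => s (n + b)).
Proof.
  intros (k & m & H). exists (k + b), (m + a). intro n.
  replace (n + (k + b) + a) with ((n + a + b) + k) by lia. rewrite H. f_equal; lia.
Qed.
Lemma req_act (h : Aut adj) (r s : nat -> X) : ray_equiv r s -> ray_equiv (act_ray h r) (act_ray h s).
Proof. intros (k & m & H). exists k, m. intro n. unfold act_ray. rewrite H. auto. Qed.
Lemma req_eq (r s : nat -> X) : (forall n, r n = s n) -> ray_equiv r s.
Proof. intros H. exists 0, 0. auto. Qed.

Lemma ray_unique r s : is_ray adj r -> is_ray adj s -> r 0 = s 0 -> ray_equiv r s ->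
  forall i, r i = s i.
Proof.
  intros Hr Hs H0 (k & m & H) i.
  assert (Ek : k = m).
  { assert (E1 := ray_dist0 r k Hr). assert (E2 := ray_dist0 s m Hs).
    specialize (H 0). simpl in H. rewrite H, H0 in E1. lia. }
  subst m.
  destruct (nb_unique (2 * (i + k)) (i + k) (i + k) r s) as [_ Hag]; auto.
  - lia.
  - apply ray_nbw; auto.
  - apply ray_nbw; auto.
  - apply Hag. lia.
Qed.

Lemma ray_exists x w : is_ray adj w -> exists r, geod_ray adj x w r.
Proof.
  intros Hw.
  destruct (min_nat (fun v => exists n, dist adj x (w n) = v)) as (v0 & (n0 & Hn0) & Hmin).
  { exists (dist adj x (w 0)), 0; auto. }
  destruct (geod_exists x (w n0)) as (p & Hp & Hp0 & Hpv). rewrite Hn0 in Hp, Hpv.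
  set (r := fun i => if Nat.leb i v0 then p i else w (n0 + (i - v0))).
  assert (Hc1 : forall i, i <= v0 -> r i = p i).
  { intros i Hi. unfold r. destruct (Nat.leb_spec i v0); [auto|lia]. }
  assert (Hc2 : forall i, v0 <= i -> r i = w (n0 + (i - v0))).
  { intros i Hi. unfold r. destruct (Nat.leb_spec i v0); [|auto].
    assert (i = v0) by lia. subst i. rewrite Hpv. f_equal. lia. }
  exists r. split; [|split].
  - intro n. split.
    + destruct (le_lt_dec v0 n).
      * rewrite !Hc2 by lia. replace (n0 + (S n - v0)) with (S (n0 + (n - v0))) by lia. apply Hw.
      * rewrite !Hc1 by lia. apply Hp; lia.
    + destruct (le_lt_dec v0 n).
      * rewrite !Hc2 by lia. replace (n0 + (S (S n) - v0)) with (S (S (n0 + (n - v0)))) by lia. apply Hw.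
      * destruct (le_lt_dec (S (S n)) v0).
        -- rewrite !Hc1 by lia. apply Hp; lia.
        -- assert (Hv : v0 = S n) by lia. rewrite Hv in Hp, Hc2, Hmin.
           rewrite Hc2 by lia. rewrite Hc1 by lia. intro E.
           assert (Hd := nb_dist p n (nbw_le p (S n) n Hp ltac:(lia))).
           rewrite Hp0, <- E in Hd.
           assert (Hm := Hmin _ (ex_intro _ _ Hd)). lia.
  - rewrite Hc1 by lia. auto.
  - exists v0, n0. intro n. rewrite Hc2 by lia. f_equal. lia.
Qed.

Lemma dist_aut (h : Aut adj) a b : dist adj (af h a) (af h b) = dist adj a b.
Proof.
  destruct (geod_exists a b) as (p & Hp & Hp0 & Hpn).
  assert (nbw (fun i => af h (p i)) (dist adj a b)).
  { split; intros i Hi.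
    - apply (proj1 (af_adj h _ _)). apply Hp; auto.
    - intro E. apply (f_equal (ainv h)) in E. rewrite !ainvK in E. revert E. apply Hp; auto. }
  assert (E := nb_dist _ _ H). cbv beta in E. rewrite Hp0, Hpn in E. exact E.
Qed.

Lemma ray_act (h : Aut adj) w : is_ray adj w -> is_ray adj (act_ray h w).
Proof.
  intros Hw n. unfold act_ray. split.
  - apply (proj1 (af_adj h _ _)). apply Hw.
  - intro E. apply (f_equal (ainv h)) in E. rewrite !ainvK in E. revert E. apply Hw.
Qed.

Definition ZD (a b : nat) : Z := (Z.of_nat a - Z.of_nat b)%Z.

Lemma horo_ev o x w : is_ray adj w -> exists N, forall t, N <= t ->
  horo adj o x w = ZD (dist adj o (w t)) (dist adj x (w t)).
Proof.
  intros Hw. unfold horo.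
  match goal with |- context [epsilon ?i ?P] => assert (Hex : exists z, P z); [|
    destruct (epsilon_spec i P Hex) as (y & ro & rx & ry & (Hro & Hro0 & Hrow) & (Hrx & Hrx0 & Hrxw)
       & (Hry & Hry0 & Hryw) & Hiff & Hz); rewrite Hz] end.
  - destruct (ray_exists o w Hw) as (ro & Hro & Hro0 & Hrow).
    destruct (ray_exists x w Hw) as (rx & Hrx & Hrx0 & Hrxw).
    assert (Heq : ray_equiv ro rx) by (eapply req_trans; eauto; apply req_sym; auto).
    destruct (min_nat (fun K => exists M, forall n, ro (n + K) = rx (n + M))) as (K & (M & HM) & Kmin).
    { destruct Heq as (k & m & H). exists k, m. auto. }
    exists (ZD (dist adj o (ro K)) (dist adj x (ro K))).
    exists (ro K), ro, rx, (fun n => ro (n + K)).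
    split; [split; auto|]. split; [split; auto|]. split; [split; [|split]|split].
    + apply ray_shift; auto.
    + auto.
    + apply req_trans with ro; auto. exists 0, K. intro n. f_equal. lia.
    + intro v. split.
      * intros [[i Hi] [j Hj]]. destruct (le_lt_dec K i).
        -- exists (i - K). rewrite <- Hi. f_equal. lia.
        -- exfalso.
           assert (Hu := ray_unique (fun n => ro (n + i)) (fun n => rx (n + j))
                    (ray_shift _ _ Hro) (ray_shift _ _ Hrx) ltac:(simpl; congruence)
                    (req_shift _ _ _ _ Heq)).
           assert (Kmin' := Kmin i (ex_intro _ j Hu)). lia.
      * intros [i Hi]. split; [exists (i + K); auto|exists (i + M); rewrite <- HM; auto].
    + reflexivity.
  - destruct (proj2 (Hiff (ry 0)) (ex_intro _ 0 eq_refl)) as [[a Ha] [b Hb]].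
    assert (Ua := ray_unique (fun n => ro (n + a)) ry (ray_shift _ _ Hro) Hry ltac:(simpl; auto)
                 (req_trans _ _ _ (req_trans _ _ _ (req_shift _ _ a 0 (req_refl ro))
                     (req_eq _ _ (fun n => f_equal ro (Nat.add_0_r n)))) (req_trans _ _ _ Hrow (req_sym _ _ Hryw)))).
    assert (Ub := ray_unique (fun n => rx (n + b)) ry (ray_shift _ _ Hrx) Hry ltac:(simpl; auto)
                 (req_trans _ _ _ (req_trans _ _ _ (req_shift _ _ b 0 (req_refl rx))
                     (req_eq _ _ (fun n => f_equal rx (Nat.add_0_r n)))) (req_trans _ _ _ Hrxw (req_sym _ _ Hryw)))).
    destruct Hryw as (k & m & Hkm).
    exists m. intros t Ht.
    replace t with ((t - m) + m) by lia.
    assert (Ew : w (t - m + m) = ry (t - m + k)) by (symmetry; apply Hkm).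
    assert (Eo : dist adj o (w (t - m + m)) = t - m + k + a).
    { rewrite Ew, <- Ua, <- Hro0. cbv beta. apply ray_dist0; auto. }
    assert (Ex : dist adj x (w (t - m + m)) = t - m + k + b).
    { rewrite Ew, <- Ub, <- Hrx0. cbv beta. apply ray_dist0; auto. }
    assert (Ey : dist adj o y = a).
    { rewrite <- Hry0, <- Ha, <- Hro0. apply ray_dist0; auto. }
    assert (Ey' : dist adj x y = b).
    { rewrite <- Hry0, <- Hb, <- Hrx0. apply ray_dist0; auto. }
    unfold ZD. rewrite Eo, Ex, Ey, Ey'. lia.
Qed.


Lemma horo_cocycle o (h : Aut adj) x w : is_ray adj w ->
  horo adj o (af h x) (act_ray h w) = (horo adj o x w - horo adj o (ainv h o) w)%Z.
Proof.
  intros Hw.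
  destruct (horo_ev o (af h x) (act_ray h w) (ray_act h w Hw)) as [N1 H1].
  destruct (horo_ev o x w Hw) as [N2 H2].
  destruct (horo_ev o (ainv h o) w Hw) as [N3 H3].
  set (t := N1 + N2 + N3).
  rewrite (H1 t), (H2 t), (H3 t) by lia. unfold act_ray, ZD.
  assert (E : dist adj o (af h (w t)) = dist adj (ainv h o) (w t)).
  { rewrite <- (dist_aut h (ainv h o) (w t)), afK. reflexivity. }
  rewrite E, dist_aut. lia.
Qed.

Lemma horo_oo o w : is_ray adj w -> horo adj o o w = 0%Z.
Proof. intros Hw. destruct (horo_ev o o w Hw) as [N H]. rewrite (H N) by lia. unfold ZD. lia. Qed.

Lemma horo_req o x w w' : is_ray adj w -> is_ray adj w' -> ray_equiv w w' ->
  horo adj o x w = horo adj o x w'.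
Proof.
  intros Hw Hw' (k & m & H).
  destruct (horo_ev o x w Hw) as [N1 H1]. destruct (horo_ev o x w' Hw') as [N2 H2].
  rewrite (H1 (N1 + N2 + k)), (H2 (N1 + N2 + m)) by lia. rewrite H. reflexivity.
Qed.

Variable q : nat.
Hypothesis Hreg : forall x, exists l : list X, length l = S q /\ NoDup l /\ forall y, adj x y <-> In y l.
Variable o : X.

Definition depth x := dist adj o x.

Lemma depth_o : depth o = 0.
Proof. unfold depth. exact (nb_dist (fun _ => o) 0 ltac:(split; intros; lia)). Qed.

Lemma depth0 x : depth x = 0 -> x = o.
Proof. unfold depth; intros H. destruct (geod_exists o x) as (p & _ & H0 & Hx). rewrite H in Hx. congruence. Qed.

Lemma adj_cases y z p : adj y z -> nbw p (depth y) -> p 0 = o -> p (depth y) = y ->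
  (exists a, depth y = S a /\ p a = z) \/ depth z = S (depth y).
Proof.
  intros Hyz Hp Hp0 Hpy. remember (depth y) as n.
  destruct (classic (exists a, n = S a /\ p a = z)) as [|NE]; [left; auto|right].
  set (p' := fun i => if Nat.leb i n then p i else z).
  assert (Hc1 : forall i, i <= n -> p' i = p i).
  { intros i Hi. unfold p'. destruct (Nat.leb_spec i n); [auto|lia]. }
  assert (Hc2 : p' (S n) = z).
  { unfold p'. destruct (Nat.leb_spec (S n) n); [lia|auto]. }
  assert (Hnb : nbw p' (S n)).
  { split.
    - intros i Hi. destruct (Nat.eq_dec i n).
      + subst i. rewrite Hc2, Hc1, Hpy by lia. auto.
      + rewrite !Hc1 by lia. apply Hp; lia.
    - intros i Hi. destruct (Nat.eq_dec (S i) n).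
      + rewrite e. rewrite Hc2, Hc1 by lia. intro E. apply NE. exists i. auto.
      + rewrite !Hc1 by lia. apply Hp; lia. }
  assert (E := nb_dist _ _ Hnb). rewrite Hc2, Hc1, Hp0 in E by lia. unfold depth. exact E.
Qed.

Definition ch y z := adj y z /\ depth z = S (depth y).

Lemma adj_ch y z : adj y z -> ch y z \/ ch z y.
Proof.
  intros H. destruct (geod_exists o y) as (p & Hp & Hp0 & Hpy).
  destruct (adj_cases y z p H Hp Hp0 Hpy) as [(a & Ha & Hpa)|Hd].
  - right. split; [apply Hsym; auto|].
    assert (E := nb_dist p a (nbw_le p (depth y) a Hp ltac:(lia))).
    rewrite Hp0, Hpa in E. unfold depth in *. lia.
  - left. split; auto.
Qed.

Lemma ch_uniq z1 z2 y : ch z1 y -> ch z2 y -> z1 = z2.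
Proof.
  intros H1 H2. destruct (geod_exists o y) as (p & Hp & Hp0 & Hpy).
  destruct (adj_cases y z1 p (Hsym _ _ (proj1 H1)) Hp Hp0 Hpy) as [(a & Ha & Hpa)|Hd];
    [|destruct H1; lia].
  destruct (adj_cases y z2 p (Hsym _ _ (proj1 H2)) Hp Hp0 Hpy) as [(b & Hb & Hpb)|Hd];
    [|destruct H2; lia].
  assert (a = b) by lia. congruence.
Qed.

Lemma ch_par_ex y : y <> o -> exists z, ch z y.
Proof.
  intros Hy. destruct (geod_exists o y) as (p & Hp & Hp0 & Hpy).
  fold (depth y) in Hp, Hpy.
  destruct (depth y) as [|a] eqn:Ed; [exfalso; apply Hy; apply depth0; auto|].
  exists (p a). split.
  - rewrite <- Hpy. apply Hp; lia.
  - assert (E := nb_dist p a (nbw_le p (S a) a Hp ltac:(lia))). rewrite Hp0 in E.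
    unfold depth in *. lia.
Qed.

Definition card (A : X -> Prop) n := exists l, NoDup l /\ length l = n /\ forall x, A x <-> In x l.

Lemma card_ext (A B : X -> Prop) n : (forall x, A x <-> B x) -> card A n -> card B n.
Proof. intros H (l & H1 & H2 & H3). exists l. split; auto. split; auto. intro x. rewrite <- H. auto. Qed.

Lemma card_remove (A : X -> Prop) n a : card A (S n) -> A a -> card (fun x => A x /\ x <> a) n.
Proof.
  intros (l & Hnd & Hlen & Hiff) Ha. apply Hiff in Ha. destruct (in_split _ _ Ha) as (l1 & l2 & E). subst l.
  exists (l1 ++ l2). split; [eapply NoDup_remove_1; eauto|split].
  - rewrite length_app in *. simpl in Hlen. lia.
  - intro x. rewrite Hiff. split.
    + intros [Hx Hxa]. apply in_app_or in Hx. apply in_or_app. destruct Hx as [|[|]]; auto; congruence.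
    + intros Hx. split.
      * apply in_app_or in Hx. apply in_or_app. destruct Hx; simpl; auto.
      * intro E. subst x. eapply NoDup_remove_2; eauto.
Qed.

Lemma card_S_ex (A : X -> Prop) n : card A (S n) -> exists a, A a.
Proof. intros ([|a l] & _ & Hl & Hi); [discriminate|]. exists a. apply Hi. simpl; auto. Qed.

Lemma card_0 (A : X -> Prop) a : card A 0 -> A a -> False.
Proof. intros ([|b l] & _ & Hl & Hi) Ha; [|discriminate]. apply Hi in Ha. destruct Ha. Qed.

Lemma card_ch_o : card (ch o) (S q).
Proof.
  destruct (Hreg o) as (l & Hlen & Hnd & Hiff). exists l. split; auto. split; auto.
  intro z. rewrite <- Hiff. split; [intros [H _]; auto|].
  intros H. destruct (adj_ch o z H) as [|[_ Hd]]; auto. rewrite depth_o in Hd. lia.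
Qed.

Lemma card_ch y : y <> o -> card (ch y) q.
Proof.
  intros Hy. destruct (ch_par_ex y Hy) as [z0 Hz0]. destruct (Hreg y) as (l & Hlen & Hnd & Hiff).
  assert (Hl : card (fun x => In x l) (S q)) by (exists l; split; auto; split; auto; tauto).
  apply card_ext with (fun x => In x l /\ x <> z0).
  2:{ apply card_remove; auto. apply Hiff. apply Hsym. apply Hz0. }
  intro z. rewrite <- Hiff. split.
  - intros [Hz Hne]. destruct (adj_ch y z Hz) as [|Hc]; auto. exfalso; apply Hne; eapply ch_uniq; eauto.
  - intros [Hz Hd]. split; [apply Hz|]. intro E. subst z. destruct Hz0 as [_ D1]. lia.
Qed.

Definition bij (A B : X -> Prop) (f g : X -> X) :=
  (forall x, A x -> B (f x) /\ g (f x) = x) /\ (forall y, B y -> A (g y) /\ f (g y) = y).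

Definition upd (f : X -> X) (a b : X) := fun x => if excluded_middle_informative (x = a) then b else f x.

Lemma bij_extend A B f g a b : bij (fun x => A x /\ x <> a) (fun y => B y /\ y <> b) f g -> A a -> B b ->
  bij A B (upd f a b) (upd g b a).
Proof.
  intros [H1 H2] Ha Hb. unfold upd. split.
  - intros x Hx. destruct (excluded_middle_informative (x = a)).
    + subst. destruct (excluded_middle_informative (b = b)); [auto|congruence].
    + destruct (H1 x (conj Hx n)) as [[HB Hne] E]. split; auto.
      destruct (excluded_middle_informative (f x = b)); [congruence|auto].
  - intros x Hx. destruct (excluded_middle_informative (x = b)).
    + subst. destruct (excluded_middle_informative (a = a)); [auto|congruence].
    + destruct (H2 x (conj Hx n)) as [[HB Hne] E]. split; auto.
      destruct (excluded_middle_informative (g x = a)); [congruence|auto].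
Qed.

Lemma bij_exists : forall n A B, card A n -> card B n -> exists f g, bij A B f g.
Proof.
  induction n; intros A B HA HB.
  - exists (fun x => x), (fun x => x). split; intros x Hx; exfalso; [exact (card_0 A x HA Hx) | exact (card_0 B x HB Hx)].
  - destruct (card_S_ex _ _ HA) as [a Ha]. destruct (card_S_ex _ _ HB) as [b Hb].
    destruct (IHn _ _ (card_remove _ _ _ HA Ha) (card_remove _ _ _ HB Hb)) as (f & g & Hfg).
    exists (upd f a b), (upd g b a). apply bij_extend; auto.
Qed.

Lemma bij_prescribe n A B a b : card A n -> card B n -> A a -> B b ->
  exists f g, bij A B f g /\ f a = b.
Proof.
  intros HA HB Ha Hb. destruct n as [|n]; [exfalso; eapply card_0; eauto|].
  destruct (bij_exists n _ _ (card_remove _ _ _ HA Ha) (card_remove _ _ _ HB Hb)) as (f & g & Hfg).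
  exists (upd f a b), (upd g b a). split; [apply bij_extend; auto|].
  unfold upd. destruct (excluded_middle_informative (a = a)); [auto|congruence].
Qed.


Lemma par_ex_spec y : y <> o -> ch (epsilon (inhabits o) (fun z => ch z y)) y.
Proof. intros Hy. apply (epsilon_spec (inhabits o) (fun z => ch z y)). apply ch_par_ex; auto. Qed.

Definition par y := epsilon (inhabits o) (fun z => ch z y).

Lemma par_spec y : y <> o -> ch (par y) y.
Proof. apply par_ex_spec. Qed.

Lemma ch_ne_o z y : ch z y -> y <> o.
Proof. intros [_ H] E. subst y. rewrite depth_o in H. discriminate. Qed.

Lemma par_eq z y : ch z y -> par y = z.
Proof. intros H. eapply ch_uniq; [apply par_spec; eapply ch_ne_o; eauto|auto]. Qed.

Section Construct.
Variables (Ra Rb : nat -> X).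
Hypotheses (HRa : is_ray adj Ra) (HRa0 : Ra 0 = o) (HRb : is_ray adj Rb) (HRb0 : Rb 0 = o).

Lemma depth_ray r : is_ray adj r -> r 0 = o -> forall i, depth (r i) = i.
Proof. intros Hr H0 i. unfold depth. rewrite <- H0. apply ray_dist0; auto. Qed.

Lemma ch_ray r : is_ray adj r -> r 0 = o -> forall i, ch (r i) (r (S i)).
Proof. intros Hr H0 i. split; [apply Hr|]. rewrite !(depth_ray r Hr H0). reflexivity. Qed.

Definition sig y y' : X -> X := epsilon (inhabits (fun x : X => x))
  (fun f => exists g, bij (ch y) (ch y') f g /\
     forall i, y = Ra i -> y' = Rb i -> f (Ra (S i)) = Rb (S i)).

Lemma sig_spec y y' : (y = o <-> y' = o) -> exists g, bij (ch y) (ch y') (sig y y') g /\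
     forall i, y = Ra i -> y' = Rb i -> sig y y' (Ra (S i)) = Rb (S i).
Proof.
  intros Ht. unfold sig.
  match goal with |- context [epsilon ?i ?P] => apply (epsilon_spec i P) end.
  assert (Hc : exists m, card (ch y) m /\ card (ch y') m).
  { destruct (classic (y = o)) as [E|E].
    - exists (S q). rewrite E, (proj1 Ht E). split; apply card_ch_o.
    - exists q. split; apply card_ch; auto. intro E'. apply E, Ht, E'. }
  destruct Hc as (m & Hm & Hm').
  destruct (classic (exists i, y = Ra i /\ y' = Rb i)) as [(i & Hi1 & Hi2)|Hno].
  - destruct (bij_prescribe m (ch y) (ch y') (Ra (S i)) (Rb (S i)) Hm Hm') as (f & g & Hfg & Hf).
    + subst y. apply ch_ray; auto.
    + subst y'. apply ch_ray; auto.
    + exists f, g. split; auto. intros i' E1 E2.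
      assert (i' = i).
      { rewrite <- (depth_ray Ra HRa HRa0 i'), <- (depth_ray Ra HRa HRa0 i). congruence. }
      subst; auto.
  - destruct (bij_exists m _ _ Hm Hm') as (f & g & Hfg). exists f, g. split; auto.
    intros i E1 E2. exfalso. apply Hno. eauto.
Qed.

Fixpoint phi (n : nat) (x : X) : X :=
  match n with 0 => o | S m => sig (par x) (phi m (par x)) x end.
Definition kk x := phi (depth x) x.

Lemma kk_o : kk o = o.
Proof. unfold kk; rewrite depth_o; reflexivity. Qed.

Lemma kk_ch p x : ch p x -> kk x = sig p (kk p) x.
Proof.
  intros H. unfold kk at 1. rewrite (proj2 H). simpl. rewrite (par_eq p x H). reflexivity.
Qed.

Lemma kk_depth : forall n x, depth x = n -> depth (kk x) = n.
Proof.
  induction n; intros x Hx.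
  - rewrite (depth0 x Hx), kk_o. apply depth_o.
  - assert (Hxo : x <> o) by (intro E; subst; rewrite depth_o in Hx; discriminate).
    assert (Hp := par_spec x Hxo). set (p := par x) in *.
    assert (Hdp : depth p = n) by (destruct Hp; lia).
    assert (IH := IHn p Hdp).
    assert (Ht : p = o <-> kk p = o).
    { split; intro E.
      - rewrite E; apply kk_o.
      - apply depth0. rewrite Hdp, <- IH, E. apply depth_o. }
    destruct (sig_spec p (kk p) Ht) as (g & [Hb1 _] & _).
    rewrite (kk_ch p x Hp). destruct (Hb1 x Hp) as [[_ D] _]. lia.
Qed.

Lemma kk_type p : p = o <-> kk p = o.
Proof.
  split; intro E.
  - rewrite E; apply kk_o.
  - apply depth0. rewrite <- (kk_depth (depth p) p eq_refl), E. apply depth_o.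
Qed.

Lemma kk_chm p x : ch p x -> ch (kk p) (kk x).
Proof.
  intros H. destruct (sig_spec p (kk p) (kk_type p)) as (g & [Hb1 _] & _).
  rewrite (kk_ch p x H). apply (Hb1 x H).
Qed.

Lemma kk_inj : forall n x y, depth x = n -> kk x = kk y -> x = y.
Proof.
  induction n; intros x y Hx E.
  - rewrite (depth0 x Hx) in *. rewrite kk_o in E. symmetry. apply kk_type. auto.
  - assert (Hxo : x <> o) by (intro E'; subst; rewrite depth_o in Hx; discriminate).
    assert (Hyo : y <> o).
    { intro E'. apply Hxo. apply kk_type. rewrite E, E'. apply kk_o. }
    assert (Hpx := par_spec x Hxo). assert (Hpy := par_spec y Hyo).
    assert (Hp : par x = par y).
    { apply IHn. destruct Hpx; lia.
      apply ch_uniq with (kk x). apply kk_chm; auto. rewrite E. apply kk_chm; auto. }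
    destruct (sig_spec (par x) (kk (par x)) (kk_type _)) as (g & [Hb1 _] & _).
    rewrite (kk_ch _ _ Hpx), (kk_ch _ _ Hpy) in E. rewrite <- Hp in E.
    rewrite <- Hp in Hpy.
    destruct (Hb1 x Hpx) as [_ E1]. destruct (Hb1 y Hpy) as [_ E2]. congruence.
Qed.

Lemma kk_surj : forall n y, depth y = n -> exists x, kk x = y.
Proof.
  induction n; intros y Hy.
  - exists o. rewrite kk_o. symmetry. apply depth0; auto.
  - assert (Hyo : y <> o) by (intro E'; subst; rewrite depth_o in Hy; discriminate).
    assert (Hpy := par_spec y Hyo).
    destruct (IHn (par y) ltac:(destruct Hpy; lia)) as [p Hp].
    destruct (sig_spec p (kk p) (kk_type _)) as (g & [_ Hb2] & _).
    rewrite <- Hp in Hpy. destruct (Hb2 y Hpy) as [Hc E].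
    exists (g y). rewrite (kk_ch p _ Hc). auto.
Qed.

Lemma kk_chr x y : ch (kk x) (kk y) -> ch x y.
Proof.
  intros H. assert (Hyo : y <> o).
  { intro E. subst y. rewrite kk_o in H. eapply ch_ne_o; eauto. }
  assert (Hpy := par_spec y Hyo).
  assert (E : par y = x).
  { apply (kk_inj (depth (par y))); auto. eapply ch_uniq; [apply kk_chm; eauto|auto]. }
  rewrite <- E; auto.
Qed.

Lemma kk_adj x y : adj x y <-> adj (kk x) (kk y).
Proof.
  split; intro H.
  - destruct (adj_ch x y H) as [Hc|Hc]; apply kk_chm in Hc; [apply Hc|apply Hsym, Hc].
  - destruct (adj_ch _ _ H) as [Hc|Hc]; apply kk_chr in Hc; [apply Hc|apply Hsym, Hc].
Qed.

Lemma kk_ray : forall i, kk (Ra i) = Rb i.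
Proof.
  induction i.
  - rewrite HRa0, HRb0. apply kk_o.
  - rewrite (kk_ch _ _ (ch_ray Ra HRa HRa0 i)).
    assert (Ht := kk_type (Ra i)). rewrite IHi in *.
    destruct (sig_spec (Ra i) (Rb i) Ht) as (g & _ & Hpr). apply Hpr; auto.
Qed.

Lemma K_exists : exists h : Aut adj, af h o = o /\ forall i, af h (Ra i) = Rb i.
Proof.
  set (kinv := fun y => epsilon (inhabits o) (fun x => kk x = y)).
  assert (Hks : forall y, kk (kinv y) = y).
  { intro y. unfold kinv. apply (epsilon_spec (inhabits o) (fun x => kk x = y)).
    apply (kk_surj (depth y)); auto. }
  assert (Hki : forall x, kinv (kk x) = x).
  { intro x. apply (kk_inj (depth (kinv (kk x)))); auto. }
  exists {| af := kk; ainv := kinv; ainvK := Hki; afK := Hks; af_adj := kk_adj |}.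
  simpl. split; [apply kk_o|apply kk_ray].
Qed.

End Construct.

Lemma K_trans wp w : is_ray adj wp -> is_ray adj w ->
  exists h : Aut adj, af h o = o /\ ray_equiv (act_ray h wp) w.
Proof.
  intros Hwp Hw.
  destruct (ray_exists o wp Hwp) as (Ra & HRa & HRa0 & HRaw).
  destruct (ray_exists o w Hw) as (Rb & HRb & HRb0 & HRbw).
  destruct (K_exists Ra Rb HRa HRa0 HRb HRb0) as (h & Ho & Hr).
  exists h. split; auto.
  apply req_trans with (act_ray h Ra). apply req_act, req_sym; auto.
  apply req_trans with Rb; auto. apply req_eq. intro n. apply Hr.
Qed.


Variables (wp wm : nat -> X) (L : Z -> X) (tau r : Aut adj).
Hypotheses (Hwp : is_ray adj wp) (Hwm : is_ray adj wm)
  (HL : forall n : Z, adj (L n) (L (n + 1)%Z) /\ L (n + 2)%Z <> L n)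
  (HL0 : L 0%Z = o)
  (HLp : ray_equiv (fun n => L (Z.of_nat n)) wp)
  (HLm : ray_equiv (fun n => L (- Z.of_nat n)%Z) wm)
  (Htr : forall n : Z, af tau (L n) = L (n + 1)%Z)
  (HrK : inK o r) (Hr2 : aut_eq (aut_comp r r) (aut_id adj))
  (Hrt : forall j : Z, aut_eq (aut_comp r (aut_comp (aut_zpow tau j) (aut_inv r)))
                              (aut_zpow tau (- j))).

Definition beta x := horo adj o x wp.

Lemma L_nbw a n : nbw (fun i => L (a + Z.of_nat i)%Z) n.
Proof.
  split; intros i Hi.
  - replace (a + Z.of_nat (S i))%Z with (a + Z.of_nat i + 1)%Z by lia. apply HL.
  - replace (a + Z.of_nat (S (S i)))%Z with (a + Z.of_nat i + 2)%Z by lia. apply HL.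
Qed.

Lemma L_dist a b : (a <= b)%Z -> dist adj (L a) (L b) = Z.to_nat (b - a).
Proof.
  intros Hab. assert (H := nb_dist _ _ (L_nbw a (Z.to_nat (b - a)))). cbv beta in H.
  replace (a + Z.of_nat (Z.to_nat (b - a)))%Z with b in H by lia.
  replace (a + Z.of_nat 0)%Z with a in H by lia. exact H.
Qed.

Lemma Lp_ray : is_ray adj (fun n => L (Z.of_nat n)).
Proof.
  intro n. split.
  - replace (Z.of_nat (S n)) with (Z.of_nat n + 1)%Z by lia. apply HL.
  - replace (Z.of_nat (S (S n))) with (Z.of_nat n + 2)%Z by lia. apply HL.
Qed.

Lemma Lm_ray : is_ray adj (fun n => L (- Z.of_nat n)%Z).
Proof.
  intro n. split.
  - replace (- Z.of_nat (S n))%Z with (- Z.of_nat n - 1)%Z by lia.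
    apply Hsym. assert (H := proj1 (HL (- Z.of_nat n - 1)%Z)).
    replace (- Z.of_nat n - 1 + 1)%Z with (- Z.of_nat n)%Z in H by lia. exact H.
  - replace (- Z.of_nat (S (S n)))%Z with (- Z.of_nat n - 2)%Z by lia.
    intro E. apply (proj2 (HL (- Z.of_nat n - 2)%Z)).
    replace (- Z.of_nat n - 2 + 2)%Z with (- Z.of_nat n)%Z by lia. auto.
Qed.

Lemma beta_L m : beta (L m) = m.
Proof.
  unfold beta. rewrite (horo_req o (L m) wp _ Hwp Lp_ray (req_sym _ _ HLp)).
  destruct (horo_ev o (L m) _ Lp_ray) as [N H].
  set (t := (N + Z.to_nat (Z.abs m))%nat).
  rewrite (H t) by lia. unfold ZD. rewrite <- HL0.
  rewrite !L_dist by lia. lia.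
Qed.

Lemma npow_S' (g : Aut adj) m x : af (aut_npow g (S m)) x = af (aut_npow g m) (af g x).
Proof.
  induction m; simpl in *; auto. rewrite <- IHm. reflexivity.
Qed.

Lemma npow_cancel (g h : Aut adj) : (forall y, af h (af g y) = y) ->
  forall m x, af (aut_npow h m) (af (aut_npow g m) x) = x.
Proof.
  intros Hgh m; induction m; intro x; auto.
  rewrite npow_S'. simpl (af (aut_npow g (S m)) x). rewrite Hgh. apply IHm.
Qed.

Lemma zpow_inv j x : af (aut_zpow tau (- j)) (af (aut_zpow tau j) x) = x.
Proof.
  destruct j as [|p|p]; simpl; auto.
  - apply npow_cancel. intro y. apply ainvK.
  - apply npow_cancel. intro y. apply afK.
Qed.

Lemma npow_L m z : af (aut_npow tau m) (L z) = L (z + Z.of_nat m)%Z.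
Proof.
  induction m; simpl.
  - f_equal; lia.
  - rewrite IHm, Htr. f_equal; lia.
Qed.

Lemma ainv_tau_L z : ainv tau (L z) = L (z - 1)%Z.
Proof. rewrite <- (ainvK tau (L (z - 1)%Z)), Htr. f_equal. f_equal. lia. Qed.

Lemma npow_inv_L m z : af (aut_npow (aut_inv tau) m) (L z) = L (z - Z.of_nat m)%Z.
Proof.
  induction m; simpl.
  - f_equal; lia.
  - rewrite IHm, ainv_tau_L. f_equal; lia.
Qed.

Lemma zpow_L j z : af (aut_zpow tau j) (L z) = L (z + j)%Z.
Proof.
  destruct j as [|p|p]; simpl.
  - f_equal; lia.
  - rewrite npow_L. f_equal. lia.
  - rewrite npow_inv_L. f_equal. lia.
Qed.

Lemma req_zpow j : ray_equiv (act_ray (aut_zpow tau j) wp) wp.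
Proof.
  apply req_trans with (act_ray (aut_zpow tau j) (fun n => L (Z.of_nat n))).
  { apply req_act, req_sym, HLp. }
  apply req_trans with (fun n => L (Z.of_nat n)); auto.
  destruct (Z_le_gt_dec 0 j).
  - exists 0%nat, (Z.to_nat j). intro n. unfold act_ray. rewrite zpow_L. f_equal. lia.
  - exists (Z.to_nat (- j)), 0%nat. intro n. unfold act_ray. rewrite zpow_L. f_equal. lia.
Qed.

Lemma beta_cocycle (h : Aut adj) x : ray_equiv (act_ray h wp) wp ->
  beta (af h x) = (beta x - beta (ainv h o))%Z.
Proof.
  intros Hh. unfold beta.
  rewrite (horo_req o (af h x) wp (act_ray h wp) Hwp (ray_act h wp Hwp) (req_sym _ _ Hh)).
  apply horo_cocycle; auto.
Qed.

Lemma beta_zpow j y : beta (af (aut_zpow tau j) y) = (beta y + j)%Z.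
Proof.
  rewrite beta_cocycle by apply req_zpow.
  assert (E : ainv (aut_zpow tau j) o = L (- j)%Z).
  { rewrite <- HL0. replace 0%Z with (- j + j)%Z by lia. rewrite <- zpow_L. apply ainvK. }
  rewrite E, beta_L. lia.
Qed.

Lemma inB_beta (n : Aut adj) : inB wp n -> beta (ainv n o) = 0%Z.
Proof.
  intros [Hn [z Hz]]. assert (H := beta_cocycle n z Hn). rewrite Hz in H. lia.
Qed.

Lemma ainv_o (k : Aut adj) : af k o = o -> ainv k o = o.
Proof. intros H. rewrite <- H at 1. apply ainvK. Qed.

Lemma Hiw_unique (g : Aut adj) j : (exists k n, inK o k /\ inB wp n /\
    aut_eq g (aut_comp k (aut_comp n (aut_zpow tau j)))) -> j = (- beta (ainv g o))%Z.
Proof.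
  intros (k & n & Hk & Hn & Heq).
  set (y := ainv g o).
  assert (E := Heq y). unfold y in E at 1. rewrite afK in E. simpl in E.
  apply (f_equal (ainv k)) in E. rewrite ainvK, (ainv_o k Hk) in E.
  apply (f_equal (ainv n)) in E. rewrite ainvK in E.
  assert (E2 := beta_zpow j y). rewrite <- E, inB_beta in E2 by auto. lia.
Qed.

Lemma beta_ray Ra : geod_ray adj o wp Ra -> forall s, beta (Ra s) = Z.of_nat s.
Proof.
  intros (HRa & HRa0 & HRaw) s. unfold beta.
  rewrite (horo_req o (Ra s) wp Ra Hwp HRa (req_sym _ _ HRaw)).
  destruct (horo_ev o (Ra s) Ra HRa) as [N H].
  rewrite (H (N + s)%nat) by lia. unfold ZD.
  rewrite <- HRa0 at 1. rewrite ray_dist0 by auto.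
  replace (N + s)%nat with (N + s)%nat by lia. rewrite ray_dist by auto. lia.
Qed.

Lemma Hiw_exists (g : Aut adj) : exists j, exists k n, inK o k /\ inB wp n /\
    aut_eq g (aut_comp k (aut_comp n (aut_zpow tau j))).
Proof.
  destruct (K_trans wp (act_ray g wp) Hwp (ray_act g wp Hwp)) as (k & Hk & Hkw).
  set (j := (- beta (ainv g o))%Z).
  set (n := aut_comp (aut_inv k) (aut_comp g (aut_zpow tau (- j)))).
  exists j, k, n. split; [exact Hk|split].
  2:{ intro x. simpl. rewrite zpow_inv, afK. reflexivity. }
  split.
  - apply req_trans with (act_ray (aut_inv k) (act_ray g wp)).
    + apply req_trans with (act_ray (aut_inv k) (act_ray g (act_ray (aut_zpow tau (- j)) wp))).
      * apply req_eq. intro t. reflexivity.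
      * apply req_act, req_act, req_zpow.
    + apply req_trans with (act_ray (aut_inv k) (act_ray k wp)).
      * apply req_act, req_sym, Hkw.
      * apply req_eq. intro t. unfold act_ray. simpl. apply ainvK.
  - set (x0 := af (aut_zpow tau j) (ainv g o)).
    assert (Hx0 : af n x0 = o).
    { unfold n, x0. simpl. rewrite zpow_inv, afK. apply ainv_o; auto. }
    assert (Hc : beta (ainv n o) = 0%Z).
    { rewrite <- Hx0, ainvK. unfold x0. rewrite beta_zpow. unfold j. lia. }
    assert (Hnw : ray_equiv (act_ray n wp) wp).
    { apply req_trans with (act_ray (aut_inv k) (act_ray g wp)).
      + apply req_trans with (act_ray (aut_inv k) (act_ray g (act_ray (aut_zpow tau (- j)) wp))).
        * apply req_eq. intro t. reflexivity.
        * apply req_act, req_act, req_zpow.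
      + apply req_trans with (act_ray (aut_inv k) (act_ray k wp)).
        * apply req_act, req_sym, Hkw.
        * apply req_eq. intro t. unfold act_ray. simpl. apply ainvK. }
    destruct (ray_exists o wp Hwp) as (Ra & HRa).
    assert (Hq : ray_equiv (act_ray n Ra) Ra).
    { destruct HRa as (_ & _ & HRaw).
      apply req_trans with (act_ray n wp). apply req_act; auto.
      apply req_trans with wp; auto. apply req_sym; auto. }
    destruct Hq as (K & M & HKM).
    assert (E : af n (Ra K) = Ra M) by exact (HKM 0%nat).
    assert (E2 := beta_cocycle n (Ra K) Hnw). rewrite E, Hc, !(beta_ray Ra HRa) in E2.
    assert (K = M) by lia. subst M. exists (Ra K). auto.
Qed.

Lemma Hiw_val (g : Aut adj) : Hiw o wp tau g = (- beta (ainv g o))%Z.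
Proof.
  apply Hiw_unique. unfold Hiw.
  match goal with |- context [epsilon ?i ?P] => apply (epsilon_spec i P) end.
  apply Hiw_exists.
Qed.


Lemma r_self y : ainv r y = af r y.
Proof.
  assert (H := Hr2 y). simpl in H. rewrite <- H at 1. apply ainvK.
Qed.

Lemma r_L z : af r (L z) = L (- z)%Z.
Proof.
  assert (H := Hrt z o). simpl in H. rewrite (ainv_o r HrK) in H.
  rewrite <- HL0 in H. rewrite !zpow_L in H.
  replace (0 + z)%Z with z in H by lia. replace (0 + - z)%Z with (- z)%Z in H by lia. exact H.
Qed.

Lemma req_r : ray_equiv (act_ray r wm) wp.
Proof.
  apply req_trans with (act_ray r (fun n => L (- Z.of_nat n)%Z)).
  { apply req_act, req_sym, HLm. }
  apply req_trans with (fun n => L (Z.of_nat n)); auto.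
  apply req_eq. intro n. unfold act_ray. rewrite r_L. f_equal. lia.
Qed.

Lemma beta_r y : beta (ainv r y) = horo adj o y wm.
Proof.
  rewrite r_self. unfold beta.
  rewrite (horo_req o (af r y) wp (act_ray r wm) Hwp (ray_act r wm Hwm) (req_sym _ _ req_r)).
  rewrite horo_cocycle by auto. rewrite (ainv_o r HrK), horo_oo by auto. lia.
Qed.

Lemma horo_neg (h : Aut adj) w : is_ray adj w ->
  horo adj o (af h o) (act_ray h w) = (- horo adj o (ainv h o) w)%Z.
Proof. intros Hw. rewrite horo_cocycle, horo_oo by auto. lia. Qed.

Lemma horo_inv (h : Aut adj) u w : is_ray adj w ->
  horo adj o (ainv h u) w = (horo adj o u (act_ray h w) + horo adj o (ainv h o) w)%Z.
Proof.
  intros Hw. assert (H := horo_cocycle o h (ainv h u) w Hw). rewrite afK in H. lia.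
Qed.

Lemma main_F (g g' : Aut adj) :
  (horo adj o (af g o) (act_ray g wm) = Hiw o wp tau (aut_comp g r) /\
   Hiw o wp tau (aut_comp g r) = (- horo adj o (af (aut_inv g) o) wm)%Z) /\
  Hiw o wp tau (aut_comp g' g) =
    (Hiw o wp tau g + horo adj o (af g' o) (act_ray (aut_comp g' g) wp))%Z /\
  Hiw o wp tau (aut_comp g' (aut_comp g r)) =
    (Hiw o wp tau (aut_comp g r) + horo adj o (af g' o) (act_ray (aut_comp g' g) wm))%Z.
Proof.
  assert (A1 : Hiw o wp tau (aut_comp g r) = (- horo adj o (ainv g o) wm)%Z).
  { rewrite Hiw_val. change (ainv (aut_comp g r) o) with (ainv r (ainv g o)).
    rewrite beta_r. reflexivity. }
  assert (A2 : Hiw o wp tau (aut_comp g' (aut_comp g r)) =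
               (- horo adj o (ainv g (ainv g' o)) wm)%Z).
  { rewrite Hiw_val. change (ainv (aut_comp g' (aut_comp g r)) o) with (ainv r (ainv g (ainv g' o))).
    rewrite beta_r. reflexivity. }
  change (act_ray (aut_comp g' g) wp) with (act_ray g' (act_ray g wp)).
  change (act_ray (aut_comp g' g) wm) with (act_ray g' (act_ray g wm)).
  change (af (aut_inv g) o) with (ainv g o).
  rewrite A1, A2, !Hiw_val.
  change (ainv (aut_comp g' g) o) with (ainv g (ainv g' o)).
  unfold beta.
  rewrite horo_neg by auto.
  rewrite (horo_neg g' (act_ray g wp)) by (apply ray_act; auto).
  rewrite (horo_neg g' (act_ray g wm)) by (apply ray_act; auto).
  rewrite (horo_inv g (ainv g' o) wp), (horo_inv g (ainv g' o) wm) by auto.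
  split; [split|split]; lia.
Qed.

End Tree.

Theorem lemma2p3 (q : nat) (hq : 2 <= q) (X : Type) (adj : X -> X -> Prop)
  (Htree : is_regular_tree adj q)
  (o : X) (wm wp : nat -> X)
  (Hwm : is_ray adj wm) (Hwp : is_ray adj wp) (Hneq : ~ ray_equiv wm wp)
  (* o lies on the geodesic ]wm, wp[, parametrized by L with L 0 = o *)
  (L : Z -> X)
  (HL : forall n : Z, adj (L n) (L (n + 1)%Z) /\ L (n + 2)%Z <> L n)
  (HL0 : L 0%Z = o)
  (HLp : ray_equiv (fun n => L (Z.of_nat n)) wp)
  (HLm : ray_equiv (fun n => L (- Z.of_nat n)%Z) wm)
  (tau : Aut adj)
  (Htp : ray_equiv (act_ray tau wp) wp) (Htm : ray_equiv (act_ray tau wm) wm)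
  (Htr : forall n : Z, af tau (L n) = L (n + 1)%Z)
  (r : Aut adj) (HrK : inK o r) (Hr2 : aut_eq (aut_comp r r) (aut_id adj))
  (Hrt : forall j : Z, aut_eq (aut_comp r (aut_comp (aut_zpow tau j) (aut_inv r)))
                              (aut_zpow tau (- j)))
  (g g' : Aut adj) :
  (horo adj o (af g o) (act_ray g wm) = Hiw o wp tau (aut_comp g r) /\
   Hiw o wp tau (aut_comp g r) = (- horo adj o (af (aut_inv g) o) wm)%Z) /\
  Hiw o wp tau (aut_comp g' g) =
    (Hiw o wp tau g + horo adj o (af g' o) (act_ray (aut_comp g' g) wp))%Z /\
  Hiw o wp tau (aut_comp g' (aut_comp g r)) =
    (Hiw o wp tau (aut_comp g r) + horo adj o (af g' o) (act_ray (aut_comp g' g) wm))%Z.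
Proof.
  destruct Htree as (Hsym & _ & Hconn & Hcyc & Hreg).
  eapply main_F; eauto.
Qed.
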